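(* Let $G$ be a connected graph and $I\subseteq V(G)$ a pre-cycle core of $G$. Then for any $y,z\in I$, every non-backtracking path in $G$ between $y$ and $z$ is contained in the induced subgraph $G|_I$.
   Context: Graphs are simple and unoriented, possibly infinite. A cycle in $G$ is a closed path $(x_0,\dots,x_n=x_0)$ with no repeated vertices except $x_0=x_n$ and no edges $(x_i,x_j)$ of $G$ with $i-j\not\equiv0,\pm1\pmod n$. A pre-cycle core of $G$ is a subset $I\subseteq V(G)$ such that $G|_I$ is connected and contains all cycles of $G$. A path is non-backtracking if it never traverses an edge and immediately returns along it. *)

(* Defs.v *)
From Stdlib Require Import Arith.

Record graph := Graph {
  vtx : Type;
  adj : vtx -> vtx -> Prop;
  adj_sym : forall x y, adj x y -> adj y x;
  adj_irrefl : forall x, ~ adj x x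
}.

(* A path (walk, repeated vertices allowed) of length n: x_0, ..., x_n
   given as p 0, ..., p n, with consecutive vertices adjacent. *)
Definition is_path (G : graph) (p : nat -> vtx G) (n : nat) : Prop :=
  forall i, i < n -> adj G (p i) (p (S i)).

Definition non_backtracking (G : graph) (p : nat -> vtx G) (n : nat) : Prop :=
  forall i, S (S i) <= n -> p i <> p (S (S i)).

Definition connected (G : graph) : Prop :=
  forall x y : vtx G, exists (p : nat -> vtx G) (n : nat),
    is_path G p n /\ p 0 = x /\ p n = y.

Definition induced_connected (G : graph) (I : vtx G -> Prop) : Prop :=
  forall x y : vtx G, I x -> I y -> exists (p : nat -> vtx G) (n : nat),
    is_path G p n /\ p 0 = x /\ p n = y /\ (forall i, i <= n -> I (p i)).

(* A cycle (x_0, ..., x_n = x_0): closed path, no repeated vertices except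
   x_0 = x_n, no chords (edges x_i x_j with i - j not 0, +-1 mod n).
   In a simple graph such a cycle has n >= 3. *)
Definition is_cycle (G : graph) (p : nat -> vtx G) (n : nat) : Prop :=
  3 <= n /\ is_path G p n /\ p n = p 0 /\
  (forall i j, i < n -> j < n -> p i = p j -> i = j) /\
  (forall i j, i < n -> j < n -> adj G (p i) (p j) ->
     j = S i \/ i = S j \/ (i = 0 /\ j = n - 1) \/ (j = 0 /\ i = n - 1)).

Definition pre_cycle_core (G : graph) (I : vtx G -> Prop) : Prop :=
  induced_connected G I /\
  (forall (p : nat -> vtx G) (n : nat), is_cycle G p n ->
     forall i, i <= n -> I (p i)).

(* Main.v *)
Require Import Defs.
From Stdlib Require Import Arith.
From Stdlib Require Import Lia Classical.

Definition splice {A} (p : nat -> A) (i d k : nat) : A :=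
  if le_lt_dec k i then p k else p (k + d).
Definition catp {A} (p q : nat -> A) (a l k : nat) : A :=
  if le_lt_dec k l then p (a + k) else q (k - l).

Lemma cyc_all (G : graph) (I : vtx G -> Prop)
 (HI : forall p n, is_cycle G p n -> forall i, i <= n -> I (p i)) :
 forall n p, 3 <= n -> is_path G p n -> p n = p 0 ->
 (forall i j, i < n -> j < n -> p i = p j -> i = j) -> forall m, m <= n -> I (p m).
Proof.
 intro n. induction n as [n IH] using lt_wf_ind.
 intros p H3 Hp Hc Hinj m Hm.
 destruct (classic (exists i j, i < j /\ j < n /\ adj G (p i) (p j) /\ j <> S i /\ ~ (i = 0 /\ j = n - 1)))
   as [[i [j [Hij [Hjn [Ha [Hn1 Hn2]]]]]] | Hno].
 - destruct (classic (i < m < j)) as [Hin|Hout].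
   + pose (r := catp p (fun _ => p i) i (j - i)).
     assert (Hr : I (r (m - i))).
     { apply (IH (S (j - i))); try lia.
       - intros k Hk. unfold r, catp.
         destruct (le_lt_dec k (j-i)); destruct (le_lt_dec (S k) (j-i)); try lia.
         + replace (i + S k) with (S (i+k)) by lia. apply Hp. lia.
         + assert (k = j - i) by lia. subst k. replace (i + (j-i)) with j by lia.
           apply adj_sym; exact Ha.
       - unfold r, catp. destruct (le_lt_dec (S (j-i)) (j-i)); try lia.
         destruct (le_lt_dec 0 (j-i)); try lia. f_equal; lia.
       - intros s t Hs Ht E. unfold r, catp in E.
         destruct (le_lt_dec s (j-i)); destruct (le_lt_dec t (j-i)); try lia.
         apply Hinj in E; lia. }
     unfold r, catp in Hr. destruct (le_lt_dec (m-i) (j-i)); try lia.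
     replace (i + (m-i)) with m in Hr by lia. exact Hr.
   + assert (Hq : forall m', m' <= n - (j - i - 1) -> I (splice p i (j - i - 1) m')).
     { intros m' Hm'. apply (IH (n - (j - i - 1))); try lia.
       - intros k Hk. unfold splice.
         destruct (le_lt_dec k i); destruct (le_lt_dec (S k) i); try lia.
         + apply Hp; lia.
         + assert (k = i) by lia. subst k.
           replace (S i + (j - i - 1)) with j by lia. exact Ha.
         + replace (S k + (j - i - 1)) with (S (k + (j - i - 1))) by lia. apply Hp; lia.
       - unfold splice. destruct (le_lt_dec (n - (j - i - 1)) i); try lia.
         destruct (le_lt_dec 0 i); try lia.
         replace (n - (j - i - 1) + (j - i - 1)) with n by lia. exact Hc.
       - intros s t Hs Ht E. unfold splice in E.
         destruct (le_lt_dec s i); destruct (le_lt_dec t i); apply Hinj in E; lia. }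
     destruct (le_lt_dec m i).
     * specialize (Hq m ltac:(lia)). unfold splice in Hq.
       destruct (le_lt_dec m i); try lia. exact Hq.
     * specialize (Hq (m - (j - i - 1)) ltac:(lia)). unfold splice in Hq.
       destruct (le_lt_dec (m - (j - i - 1)) i); try lia.
       replace (m - (j - i - 1) + (j - i - 1)) with m in Hq by lia. exact Hq.
 - apply (HI p n); [|exact Hm]. unfold is_cycle. split; [lia|]. split; [exact Hp|].
   split; [exact Hc|]. split; [exact Hinj|].
   intros i j Hi Hj Ha.
   destruct (classic (j = S i \/ i = S j \/ (i = 0 /\ j = n - 1) \/ (j = 0 /\ i = n - 1))) as [H|H];
     [exact H|exfalso].
   destruct (lt_eq_lt_dec i j) as [[Hlt|Heq]|Hgt].
   + apply Hno. exists i, j. split; [lia|]. split; [lia|]. split; [exact Ha|].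
     split; intro; apply H; tauto.
   + subst. exact (adj_irrefl G _ Ha).
   + apply Hno. exists j, i. split; [lia|]. split; [lia|]. split; [apply adj_sym; exact Ha|].
     split; intro; apply H; tauto.
Qed.

Lemma min_loop {A} (p : nat -> A) : forall g i j, j - i = g -> i < j -> p i = p j ->
 exists i' j', i <= i' /\ i' < j' /\ j' <= j /\ p i' = p j' /\
  (forall s t, i' <= s -> s < t -> t <= j' -> p s = p t -> s = i' /\ t = j').
Proof.
 intro g; induction g as [g IH] using lt_wf_ind. intros i j Hg Hij E.
 destruct (classic (exists s t, i <= s /\ s < t /\ t <= j /\ p s = p t /\ ~(s = i /\ t = j)))
   as [[s [t [H1 [H2 [H3 [H4 H5]]]]]]|Hn].
 - destruct (IH (t - s) ltac:(lia) s t eq_refl H2 H4) as [i' [j' [K1 [K2 [K3 [K4 K5]]]]]].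
   exists i', j'. split; [lia|]. split; [lia|]. split; [lia|]. split; auto.
 - exists i, j. split; [lia|]. split; [lia|]. split; [lia|]. split; auto.
   intros s t Hs Hst Ht Est. destruct (classic (s = i /\ t = j)) as [?|Hne]; auto.
   exfalso; apply Hn; exists s, t; repeat split; auto.
Qed.

Lemma simple_path (G : graph) (I : vtx G -> Prop) : forall m p, is_path G p m ->
 (forall k, k <= m -> I (p k)) ->
 exists q m', is_path G q m' /\ q 0 = p 0 /\ q m' = p m /\ (forall k, k <= m' -> I (q k)) /\
   (forall s t, s <= m' -> t <= m' -> q s = q t -> s = t).
Proof.
 intro m; induction m as [m IH] using lt_wf_ind. intros p Hp HI.
 destruct (classic (exists s t, s < t /\ t <= m /\ p s = p t)) as [[s [t [H1 [H2 H3]]]]|Hn].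
 - destruct (IH (m - (t - s)) ltac:(lia) (splice p s (t - s))) as [q' [m' [A1 [A2 [A3 [A4 A5]]]]]].
   + intros k Hk; unfold splice.
     destruct (le_lt_dec k s); destruct (le_lt_dec (S k) s); try lia.
     * apply Hp; lia.
     * assert (k = s) by lia; subst k. rewrite H3.
       replace (S s + (t - s)) with (S t) by lia. apply Hp; lia.
     * replace (S k + (t-s)) with (S (k + (t-s))) by lia. apply Hp; lia.
   + intros k Hk; unfold splice; destruct (le_lt_dec k s); apply HI; lia.
   + exists q', m'. rewrite A2, A3. unfold splice.
     destruct (le_lt_dec 0 s); try lia. destruct (le_lt_dec (m - (t-s)) s).
     * split; auto. split; auto. split.
       -- replace (m - (t-s)) with s by lia; rewrite H3; f_equal; lia.
       -- split; auto.
     * replace (m - (t-s) + (t-s)) with m by lia. repeat split; auto.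
 - exists p, m. repeat split; auto. intros s t Hs Ht E.
   destruct (lt_eq_lt_dec s t) as [[?|?]|?]; auto; exfalso; apply Hn.
   + exists s, t; auto.
   + exists t, s; auto.
Qed.

Theorem corollary2p3 (G : graph) (I : vtx G -> Prop) :
  connected G -> pre_cycle_core G I ->
  forall (y z : vtx G), I y -> I z ->
  forall (p : nat -> vtx G) (n : nat),
    is_path G p n -> non_backtracking G p n -> p 0 = y -> p n = z ->
    forall i, i <= n -> I (p i).
Proof.
 intros Hconn [Hic Hcyc] y z Hy Hz p n Hp Hnb H0 Hn i Hi.
 destruct (classic (I (p i))) as [H|Hout]; [exact H|exfalso].
 assert (HA := cyc_all G I Hcyc).
 assert (Ea : forall k, k <= n -> ~ I (p k) -> exists a, a < k /\ I (p a) /\ forall t, a < t <= k -> ~ I (p t)).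
 { induction k as [|k IHk]; intros Hk Hnk.
   - rewrite H0 in Hnk; contradiction.
   - destruct (classic (I (p k))) as [Hpk|Hpk].
     + exists k; split; [lia|]; split; auto. intros t Ht; assert (t = S k) by lia; subst; auto.
     + destruct (IHk ltac:(lia) Hpk) as [a [Ha1 [Ha2 Ha3]]]. exists a; split; [lia|]; split; auto.
       intros t Ht. destruct (Nat.eq_dec t (S k)); [subst; auto| apply Ha3; lia]. }
 assert (Eb : forall d k, n = k + d -> ~ I (p k) -> exists b, k < b /\ b <= n /\ I (p b) /\ forall t, k <= t < b -> ~ I (p t)).
 { induction d as [|d IHd]; intros k Hkd Hnk.
   - replace k with n in Hnk by lia. rewrite Hn in Hnk; contradiction.
   - destruct (classic (I (p (S k)))) as [Hpk|Hpk].
     + exists (S k); split; [lia|]; split; [lia|]; split; auto.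
       intros t Ht; assert (t = k) by lia; subst; auto.
     + destruct (IHd (S k) ltac:(lia) Hpk) as [b [B1 [B2 [B3 B4]]]].
       exists b; split; [lia|]; split; [lia|]; split; auto.
       intros t Ht; destruct (Nat.eq_dec t k); [subst; auto| apply B4; lia]. }
 destruct (Ea i Hi Hout) as [a [Ha1 [Ha2 Ha3]]].
 destruct (Eb (n - i) i ltac:(lia) Hout) as [b [Hb1 [Hb2 [Hb3 Hb4]]]].
 assert (Hint : forall t, a < t < b -> ~ I (p t)).
 { intros t Ht. destruct (le_lt_dec t i); [apply Ha3|apply Hb4]; lia. }
 assert (Hinj : forall s t, a < s -> s < t -> t < b -> p s <> p t).
 { intros s t H1 H2 H3 E.
   destruct (min_loop p (t - s) s t eq_refl H2 E) as [i' [j' [C1 [C2 [C3 [C4 C5]]]]]].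
   apply (Hint i'); [lia|].
   assert (j' - i' <> 1).
   { intro. assert (Hadj := Hp i' ltac:(lia)). replace (S i') with j' in Hadj by lia.
     rewrite <- C4 in Hadj. exact (adj_irrefl _ _ Hadj). }
   assert (j' - i' <> 2).
   { intro. apply (Hnb i'); [lia|]. replace (S (S i')) with j' by lia. exact C4. }
   replace (p i') with ((fun k => p (i' + k)) 0) by (f_equal; lia).
   apply (HA (j' - i') (fun k => p (i' + k))); try lia.
   - intros k Hk. simpl. replace (i' + S k) with (S (i'+k)) by lia. apply Hp; lia.
   - simpl. replace (i' + (j' - i')) with j' by lia. replace (i' + 0) with i' by lia. symmetry; exact C4.
   - intros u v Hu Hv E'. simpl in E'.
     destruct (lt_eq_lt_dec u v) as [[?|?]|?]; auto.
     + destruct (C5 (i'+u) (i'+v) ltac:(lia) ltac:(lia) ltac:(lia) E'); lia.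
     + destruct (C5 (i'+v) (i'+u) ltac:(lia) ltac:(lia) ltac:(lia) (eq_sym E')); lia. }
 destruct (Hic (p b) (p a) Hb3 Ha2) as [q0 [m0 [Q1 [Q2 [Q3 Q4]]]]].
 destruct (simple_path G I m0 q0 Q1 Q4) as [q [m [R1 [R2 [R3 [R4 R5]]]]]].
 rewrite Q2 in R2; rewrite Q3 in R3.
 assert (Hseg : forall u v, u < v -> v <= b - a -> (v = b - a -> 0 < m) -> p (a+u) <> p (a+v)).
 { intros u v Huv Hv Hm E.
   destruct (Nat.eq_dec u 0) as [Hu0|Hu0].
   - subst u. rewrite Nat.add_0_r in E. destruct (Nat.eq_dec v (b - a)).
     + replace (a + v) with b in E by lia. specialize (Hm e).
       assert (0 = m) by (apply R5; [lia|lia|congruence]). lia.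
     + apply (Hint (a+v)); [lia|]. rewrite <- E; exact Ha2.
   - destruct (Nat.eq_dec v (b - a)).
     + apply (Hint (a+u)); [lia|]. rewrite E. replace (a+v) with b by lia. exact Hb3.
     + exact (Hinj (a+u) (a+v) ltac:(lia) ltac:(lia) ltac:(lia) E). }
 assert (Hmix : forall s t', s <= b - a -> 0 < t' < m -> p (a+s) <> q t').
 { intros s t' Hs Ht E.
   destruct (Nat.eq_dec s 0).
   - subst s. rewrite Nat.add_0_r, <- R3 in E. apply R5 in E; lia.
   - destruct (Nat.eq_dec s (b - a)).
     + replace (a + s) with b in E by lia. rewrite <- R2 in E. apply R5 in E; lia.
     + apply (Hint (a+s)); [lia|]. rewrite E. apply R4; lia. }
 assert (Hc1 : I (catp p q a (b - a) 1)).
 { apply (HA (b - a + m)); try lia.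
   - destruct (Nat.eq_dec m 0) as [Hm0|Hm0]; [|lia].
     subst m. assert (p a = p b) by congruence.
     assert (b - a <> 2).
     { intro. apply (Hnb a); [lia|]. replace (S (S a)) with b by lia; auto. }
     lia.
   - intros k Hk. unfold catp.
     destruct (le_lt_dec k (b-a)); destruct (le_lt_dec (S k) (b-a)); try lia.
     + replace (a + S k) with (S (a+k)) by lia; apply Hp; lia.
     + replace (a+k) with b by lia. replace (S k - (b-a)) with 1 by lia.
       rewrite <- R2; apply R1; lia.
     + replace (S k - (b-a)) with (S (k - (b-a))) by lia; apply R1; lia.
   - unfold catp. destruct (le_lt_dec (b-a+m) (b-a)); destruct (le_lt_dec 0 (b-a)); try lia.
     + assert (m = 0) by lia. subst m. replace (a + (b - a + 0)) with b by lia.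
       rewrite Nat.add_0_r. congruence.
     + replace (b-a+m-(b-a)) with m by lia; rewrite R3, Nat.add_0_r; reflexivity.
   - intros s t Hs Ht E. unfold catp in E.
     destruct (le_lt_dec s (b-a)); destruct (le_lt_dec t (b-a)).
     + destruct (lt_eq_lt_dec s t) as [[?|?]|?]; auto; exfalso.
       * exact (Hseg s t ltac:(lia) ltac:(lia) ltac:(lia) E).
       * exact (Hseg t s ltac:(lia) ltac:(lia) ltac:(lia) (eq_sym E)).
     + exfalso. exact (Hmix s (t - (b - a)) ltac:(lia) ltac:(lia) E).
     + exfalso. exact (Hmix t (s - (b - a)) ltac:(lia) ltac:(lia) (eq_sym E)).
     + apply R5 in E; lia. }
 unfold catp in Hc1. destruct (le_lt_dec 1 (b-a)); try lia.
 apply (Hint (a+1)); [lia|exact Hc1].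
Qed.
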